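(* Let $\mathcal C\subseteq\{0,1\}^n$ and $\mathcal D\subseteq\{0,1\}^m$ be neural codes and let $\phi:R_\mathcal D\to R_\mathcal C$ be a ring homomorphism. Then $\phi$ is a neural ring homomorphism if and only if the associated code map $q_\phi:\mathcal C\to\mathcal D$ is a composition of code maps of the following types (each between neural codes): 1. Permutation of labels: for a code $\mathcal A\subseteq\{0,1\}^k$ and a permutation $\sigma$ of $[k]$, the map $\mathcal A\to\mathcal A'$, $(a_1,\dots,a_k)\mapsto(a_{\sigma(1)},\dots,a_{\sigma(k)})$, where $\mathcal A'$ is the image of $\mathcal A$; 2. Adding codewords (inclusion): for codes $\mathcal A\subseteq\mathcal A'\subseteq\{0,1\}^k$, the map $\mathcal A\to\mathcal A'$, $a\mapsto a$; 3. Deleting the last neuron: $\mathcal A\to\mathcal A'$, $(a_1,\dots,a_k)\mapsto(a_1,\dots,a_{k-1})$, where $\mathcal A'$ is the image; 4. Repeating a neuron: for some $i\in[k]$, $\mathcal A\to\mathcal A'$, $(a_1,\dots,a_k)\mapsto(a_1,\dots,a_k,a_i)$, where $\mathcal A'$ is the image; 5. Adding a trivial neuron: $\mathcal A\to\mathcal A'$, $(a_1,\dots,a_k)\mapsto(a_1,\dots,a_k,0)$ for all $a$, or $(a_1,\dots,a_k)\mapsto(a_1,\dots,a_k,1)$ for all $a$, where $\mathcal A'$ is the image.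
   Context: For a code $\mathcal C\subseteq\{0,1\}^n$, $R_\mathcal C$ is the ring of all functions $\mathcal C\to\mathbb F_2$ (equivalently $\mathbb F_2[x_1,\dots,x_n]$ modulo the ideal of polynomials vanishing on $\mathcal C$), and $R[n]=R_{\{0,1\}^n}=\mathbb F_2[x_1,\dots,x_n]/\langle x_i^2-x_i\rangle$. $R_\mathcal C$ is an $R[n]$-module via $(r\cdot f)(c)=r(c)f(c)$. For $c\in\mathcal C$, $\rho_c\in R_\mathcal C$ is the indicator function of $\{c\}$. For a ring homomorphism $\phi:R_\mathcal D\to R_\mathcal C$ and $c\in\mathcal C$ there is a unique $d\in\mathcal D$ with $\phi(\rho_d)(c)=1$; the associated code map is $q_\phi(c)=$ this $d$. A ring homomorphism $\tau:R[m]\to R[n]$ is compatible with $\phi$ if $\phi(r\cdot f)=\tau(r)\cdot\phi(f)$ for all $r\in R[m]$, $f\in R_\mathcal D$. A ring homomorphism $\tau:R[m]\to R[n]$ is linear-monomial if $\tau(x_i)\in\{x_1,\dots,x_n,0,1\}$ for every $i\in[m]$. A ring homomorphism $\phi:R_\mathcal D\to R_\mathcal C$ is a neural ring homomorphism if there exists a linear-monomial ring homomorphism $\tau:R[m]\to R[n]$ compatible with $\phi$. *)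

(* Defs.v *)
From HB Require Import structures.
From mathcomp Require Import all_boot all_order all_algebra all_fingroup.
Set Implicit Arguments. Unset Strict Implicit. Unset Printing Implicit Defensive.
Import GRing.Theory.
Local Open Scope ring_scope.

Notation word n := (n.-tuple bool).
Notation code n := {set word n}.

Definition csub n (C : code n) : finType := {x : word n | x \in C}.

Definition RC n (C : code n) := {ffun csub C -> 'F_2}.

Definition Rn n := {ffun word n -> 'F_2}.

Definition xvar n (i : 'I_n) : Rn n := [ffun v : word n => (tnth v i)%:R].

Definition act n (C : code n) (r : Rn n) (f : RC C) : RC C :=
  [ffun c : csub C => r (val c) * f c].

Definition rho n (C : code n) (c : csub C) : RC C :=
  [ffun c' : csub C => (c' == c)%:R].

Definition qphi n m (C : code n) (D : code m) (phi : RC D -> RC C)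
  (c : csub C) : option (csub D) :=
  [pick d : csub D | phi (rho d) c == 1].

Definition compatible n m (C : code n) (D : code m)
  (tau : Rn m -> Rn n) (phi : RC D -> RC C) : Prop :=
  forall (r : Rn m) (f : RC D), phi (act r f) = act (tau r) (phi f).

Definition linear_monomial n m (tau : Rn m -> Rn n) : Prop :=
  forall i : 'I_m, (exists j : 'I_n, tau (xvar i) = xvar j)
                   \/ tau (xvar i) = 0 \/ tau (xvar i) = 1.

Definition neural_ring_hom n m (C : code n) (D : code m)
  (phi : {rmorphism RC D -> RC C}) : Prop :=
  exists tau : {rmorphism Rn m -> Rn n},
    linear_monomial tau /\ compatible tau phi.

(* Elementary code maps, given as maps on words (only their values on the
   source code matter). *)
Definition permw k (s : 'S_k) (a : word k) : word k :=
  [tuple tnth a (s i) | i < k].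
Definition dellast k (a : word k.+1) : word k :=
  [tuple tnth a (widen_ord (leqnSn k) i) | i < k].
Definition appendw k (b : bool) (a : word k) : word k.+1 :=
  [tuple (if (i < k)%N then nth false a i else b) | i < k.+1].
Definition repeatw k (j : 'I_k) (a : word k) : word k.+1 := appendw (tnth a j) a.

Inductive basic_map : forall k k', code k -> code k' -> (word k -> word k') -> Prop :=
| BPerm k (s : 'S_k) (A : code k) : basic_map A (permw s @: A) (permw s)
| BIncl k (A A' : code k) : A \subset A' -> basic_map A A' id
| BDel k (A : code k.+1) : basic_map A (@dellast k @: A) (@dellast k)
| BRep k (j : 'I_k) (A : code k) : basic_map A (repeatw j @: A) (repeatw j)
| BTriv k (b : bool) (A : code k) : basic_map A (appendw b @: A) (appendw b).

Inductive code_comp : forall k k', code k -> code k' -> (word k -> word k') -> Prop :=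
| CBasic k k' (A : code k) (A' : code k') f :
    basic_map A A' f -> code_comp A A' f
| CComp k1 k2 k3 (A : code k1) (B : code k2) (E : code k3) f g :
    code_comp A B f -> code_comp B E g -> code_comp A E (g \o f).

(* Main.v *)
Require Import Defs.
From HB Require Import structures.
From mathcomp Require Import all_boot all_order all_algebra all_fingroup.
Set Implicit Arguments. Unset Strict Implicit. Unset Printing Implicit Defensive.
Import GRing.Theory.
Local Open Scope ring_scope.

Lemma F2_cases (x : 'F_2) : x = 0 \/ x = 1.
Proof. case: x => [[|[|x]] //] H; [left|right]; exact: val_inj. Qed.

Lemma F2_10 : (1 : 'F_2) != 0. Proof. by []. Qed.

Section Ring.
Variables (n m : nat) (C : code n) (D : code m) (phi : {rmorphism RC D -> RC C}).

Lemma mulRC (f g : RC C) c : (f * g) c = f c * g c.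
Proof. by rewrite /GRing.mul /= ffunE. Qed.

Lemma mulRD (f g : RC D) c : (f * g) c = f c * g c.
Proof. by rewrite /GRing.mul /= ffunE. Qed.

Lemma sum_rho : \sum_d rho d = 1 :> RC D.
Proof.
apply/ffunP=> x; rewrite sum_ffunE /= ffunE (bigD1 x) //= ffunE eqxx big1 ?addr0 //.
by move=> d /negPf dx; rewrite ffunE eq_sym dx.
Qed.

Lemma qex c : exists d, phi (rho d) c = 1.
Proof.
have : (\sum_d phi (rho d)) c = 1.
  by rewrite -rmorph_sum sum_rho rmorph1 /GRing.one /= ffunE.
rewrite sum_ffunE => H.
case: (pickP (fun d => phi (rho d) c == 1)) => [d /eqP Hd|H0]; first by exists d.
move: H; rewrite big1 // => d _.
by case: (F2_cases (phi (rho d) c)) => // e; move: (H0 d); rewrite e eqxx.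
Qed.

Lemma phi_eval c d : phi (rho d) c = 1 -> forall f, phi f c = f d.
Proof.
move=> Hd f.
rewrite -[phi f c]mulr1 -Hd -mulRC -rmorphM.
case: (F2_cases (f d)) => e.
- have -> : f * rho d = 0.
    by apply/ffunP=> x; rewrite mulRD !ffunE; case: eqP => [->|]; rewrite ?e ?mulr0 ?mul0r.
  by rewrite rmorph0 /GRing.zero /= ffunE e.
- have -> : f * rho d = rho d.
    by apply/ffunP=> x; rewrite mulRD !ffunE; case: eqP => [->|]; rewrite ?e ?mulr0 ?mul1r.
  by rewrite Hd e.
Qed.

Lemma quniq c d d' : phi (rho d) c = 1 -> phi (rho d') c = 1 -> d = d'.
Proof.
move=> H H'; move: H; rewrite (phi_eval H') ffunE; by case: eqP.
Qed.

Lemma qphi_spec c : exists d, qphi phi c = Some d /\ (forall f, phi f c = f d).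
Proof.
rewrite /qphi; case: pickP => [d /eqP Hd|H].
  by exists d; split => //; apply: phi_eval.
by case: (qex c) => d Hd; move: (H d); rewrite Hd eqxx.
Qed.
End Ring.
Definition mono k k' (G : word k -> word k') :=
  forall i : 'I_k', (exists j, forall v, tnth (G v) i = tnth v j) \/
                    (exists b, forall v, tnth (G v) i = b).

Lemma mono_comp k1 k2 k3 (f : word k1 -> word k2) (g : word k2 -> word k3) :
  mono f -> mono g -> mono (g \o f).
Proof.
move=> Hf Hg i; case: (Hg i) => [[j Hj]|[b Hb]]; last by right; exists b => v; rewrite /= Hb.
case: (Hf j) => [[j' Hj']|[b Hb]].
  by left; exists j' => v; rewrite /= Hj Hj'.
by right; exists b => v; rewrite /= Hj Hb.
Qed.

Lemma tnth_appendw k b (a : word k) (i : 'I_k.+1) :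
  tnth (appendw b a) i = if (i < k)%N then nth false a i else b.
Proof. by rewrite /appendw tnth_mktuple. Qed.

Lemma appendw_mono k b : mono (@appendw k b).
Proof.
move=> i; rewrite /mono; case: (ltnP i k) => H.
  left; exists (Ordinal H) => v; by rewrite tnth_appendw H (tnth_nth false).
by right; exists b => v; rewrite tnth_appendw ltnNge H.
Qed.

Lemma repeatw_mono k (j : 'I_k) : mono (repeatw j).
Proof.
move=> i; case: (ltnP i k) => H.
  left; exists (Ordinal H) => v; by rewrite /repeatw tnth_appendw H (tnth_nth false).
by left; exists j => v; rewrite /repeatw tnth_appendw ltnNge H.
Qed.

Lemma basic_mono k k' (A : code k) (A' : code k') f : basic_map A A' f -> mono f.
Proof.
case=> {k k' A A' f}.
- by move=> k s A i; left; exists (s i) => v; rewrite /permw tnth_mktuple.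
- by move=> k A A' _ i; left; exists i.
- by move=> k A i; left; exists (widen_ord (leqnSn k) i) => v; rewrite /dellast tnth_mktuple.
- by move=> k j A; apply: repeatw_mono.
- by move=> k b A; apply: appendw_mono.
Qed.

Lemma comp_mono k k' (A : code k) (A' : code k') f : code_comp A A' f -> mono f.
Proof.
elim=> {k k' A A' f}.
- by move=> k k' A A' f /basic_mono.
- by move=> k1 k2 k3 A B E f g _ Hf _ Hg; apply: mono_comp.
Qed.
Lemma cc_id k (A : code k) (G : word k -> word k) :
  (forall v, G v = v) -> code_comp A (G @: A) id.
Proof.
move=> HG; have -> : G @: A = A by rewrite (eq_imset _ HG) imset_id.
by apply: CBasic; apply: BIncl.
Qed.

Lemma cc_step k1 k2 k3 (A : code k1) (G1 : word k1 -> word k2) (G2 : word k1 -> word k3) F f :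
  code_comp A (G1 @: A) F -> basic_map (G1 @: A) (f @: (G1 @: A)) f ->
  (forall v, f (G1 v) = G2 v) -> code_comp A (G2 @: A) (f \o F).
Proof.
move=> H1 H2 H3.
have <- : f @: (G1 @: A) = G2 @: A by rewrite -imset_comp; apply: eq_imset.
by apply: CComp H1 (CBasic H2).
Qed.

Definition takew N m (v : word N) : word m := [tuple nth false v i | i < m].

Lemma del_lemma N : forall m (A : code N), (m <= N)%N ->
  exists F, code_comp A (takew m @: A) F /\ forall v, F v = takew m v.
Proof.
elim: N => [|N IH] m A.
  rewrite leqn0 => /eqP ->; exists id; split => //.
    by apply: cc_id => v; apply: eq_from_tnth => -[].
  by move=> v; apply: eq_from_tnth => -[].
rewrite leq_eqVlt => /orP [/eqP ->|Hm].
  have Hid : forall v : word N.+1, takew N.+1 v = v.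
    by move=> v; apply: eq_from_tnth => i; rewrite tnth_mktuple (tnth_nth false).
  by exists id; split => //; apply: cc_id.
have [F [HF1 HF2]] := IH m (@dellast N @: A) Hm.
exists (F \o @dellast N); split; last first.
  move=> v /=; rewrite HF2; apply: eq_from_tnth => i; rewrite !tnth_mktuple.
  have iN : (i < N)%N by apply: leq_trans (ltn_ord i) Hm.
  by rewrite -[i : nat]/(nat_of_ord (Ordinal iN)) -tnth_nth tnth_mktuple (tnth_nth false).
have e : takew m @: (@dellast N @: A) = takew m @: A.
  rewrite -imset_comp; apply: eq_imset => v /=.
  apply: eq_from_tnth => i; rewrite !tnth_mktuple.
  have iN : (i < N)%N by apply: leq_trans (ltn_ord i) Hm.
  by rewrite -[i : nat]/(nat_of_ord (Ordinal iN)) -tnth_nth tnth_mktuple (tnth_nth false).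
rewrite -e; apply: CComp (CBasic (BDel A)) HF1.
Qed.
Lemma nth_mkt N (f : 'I_N -> bool) i (H : (i < N)%N) :
  nth false [tuple f j | j < N] i = f (Ordinal H).
Proof. by rewrite -[i]/(nat_of_ord (Ordinal H)) -tnth_nth tnth_mktuple. Qed.

Definition ext k m (G : word k -> word m) (v : word k) : word (m + k) :=
  [tuple (if (i < k)%N then nth false v i else nth false (G v) (i - k)) | i < m + k].

Lemma ext_step k m (G : word k -> word m.+1) v x :
  x = tnth (G v) ord_max ->
  appendw x (ext (fun w => takew m (G w)) v) = ext G v.
Proof.
move=> ->; apply: eq_from_tnth => i; rewrite tnth_appendw tnth_mktuple.
case: ltnP => Hi.
  rewrite (nth_mkt _ Hi) /=; case: ifP => // Hik.
  have Him : (i - k < m)%N by rewrite ltn_subLR ?(addnC k) // leqNgt Hik.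
  by rewrite (nth_mkt _ Him).
have -> : nat_of_ord i = (m + k)%N by apply/eqP; rewrite eqn_leq Hi -ltnS ltn_ord.
rewrite ltnNge leq_addl /= addnK (tnth_nth false) //.
Qed.
Lemma ext_lemma k (A : code k) m : forall G : word k -> word m, mono G ->
  exists F, code_comp A (ext G @: A) F /\ forall v, F v = ext G v.
Proof.
elim: m => [|m IH] G HG.
  have Hid : forall v, ext G v = v.
    by move=> v; apply: eq_from_tnth => i; rewrite tnth_mktuple ltn_ord (tnth_nth false).
  by exists id; split => //; apply: cc_id.
set G' := fun w => takew m (G w).
have HG' : mono G'.
  move=> i; case: (HG (widen_ord (leqnSn m) i)) => [[j Hj]|[b Hb]].
    by left; exists j => v; rewrite /G' tnth_mktuple -Hj (tnth_nth false).
  by right; exists b => v; rewrite /G' tnth_mktuple -(Hb v) (tnth_nth false).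
have [F [HF1 HF2]] := IH G' HG'.
case: (HG ord_max) => [[j Hj]|[b Hb]].
  pose j' : 'I_(m + k) := Ordinal (leq_trans (ltn_ord j) (leq_addl m k)).
  exists (repeatw j' \o F); split.
    apply: cc_step HF1 (BRep _ _) _ => v.
    apply: ext_step; rewrite Hj /j' tnth_mktuple /= ltn_ord (tnth_nth false) //.
  move=> v /=; rewrite HF2; apply: ext_step.
  by rewrite Hj /j' tnth_mktuple /= ltn_ord (tnth_nth false).
exists (appendw b \o F); split.
  by apply: cc_step HF1 (BTriv _ _) _ => v; apply: ext_step; rewrite Hb.
by move=> v /=; rewrite HF2; apply: ext_step; rewrite Hb.
Qed.
From mathcomp Require Import zify.
Section Perm.
Variables (m k : nat).
Definition gsh (i : nat) := if (i < m)%N then (k + i)%N else (i - m)%N.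
Definition fsh (i : 'I_(m + k)) : 'I_(m + k) := insubd i (gsh i).
Lemma gsh_lt (i : 'I_(m + k)) : (gsh i < m + k)%N.
Proof.
rewrite /gsh; case: ifP => H.
  by rewrite addnC ltn_add2r.
by apply: leq_ltn_trans (leq_subr _ _) (ltn_ord i).
Qed.
Lemma fshE i : val (fsh i) = gsh i.
Proof. by rewrite /fsh val_insubd gsh_lt. Qed.
Lemma fsh_inj : injective fsh.
Proof.
move=> i j /(congr1 val); rewrite !fshE /gsh => H; apply: val_inj => /=.
move: H (ltn_ord i) (ltn_ord j); case: ifP => Hi; case: ifP => Hj; lia.
Qed.
Definition sh : 'S_(m + k) := perm fsh_inj.
End Perm.

Lemma build n m (C : code n) (G : word n -> word m) : mono G ->
  exists F, code_comp C (G @: C) F /\ forall v, F v = G v.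
Proof.
move=> HG.
have [F1 [H1 H1']] := ext_lemma C HG.
set s := sh m n.
have H2 : code_comp C ((permw s \o ext G) @: C) (permw s \o F1).
  by apply: cc_step H1 (BPerm _ _) _.
have [F3 [H3 H3']] := @del_lemma _ m ((permw s \o ext G) @: C) (leq_addr n m).
have key : forall v, takew m (permw s (ext G v)) = G v.
  move=> v; apply: eq_from_tnth => i; rewrite tnth_mktuple.
  have Him : (i < m + n)%N by apply: leq_trans (ltn_ord i) (leq_addr n m).
  rewrite (nth_mkt _ Him) permE tnth_mktuple fshE /gsh /= ltn_ord.
  rewrite ltnNge leq_addr /= addKn (tnth_nth false) //.
exists (F3 \o (permw s \o F1)); split; last by move=> v /=; rewrite H3' H1' key.
have e : takew m @: ((permw s \o ext G) @: C) = G @: C.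
  by rewrite -imset_comp; apply: eq_imset => v /=; rewrite key.
by rewrite -e; apply: CComp H2 H3.
Qed.
Section Comap.
Variables (n m : nat) (F : word n -> word m).
Definition comap (r : Rn m) : Rn n := [ffun v => r (F v)].
Fact comap_zmod : GRing.zmod_morphism comap.
Proof. by move=> x y; apply/ffunP => v; rewrite !ffunE. Qed.
HB.instance Definition _ := GRing.isZmodMorphism.Build (Rn m) (Rn n) comap comap_zmod.
Fact comap_monoid : GRing.monoid_morphism comap.
Proof. by split; [apply/ffunP => v; rewrite !ffunE | move=> x y; apply/ffunP => v; rewrite !ffunE]. Qed.
HB.instance Definition _ := GRing.isMonoidMorphism.Build (Rn m) (Rn n) comap comap_monoid.
End Comap.

Theorem theorem4 (n m : nat) (C : code n) (D : code m)
  (phi : {rmorphism RC D -> RC C}) :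
  neural_ring_hom phi <->
  exists F : word n -> word m,
    code_comp C D F /\
    forall c : csub C, omap val (qphi phi c) = Some (F (val c)).
Proof.
split.
- case=> tau [Hlm Hc].
  pose G (v : word n) : word m := [tuple (tau (xvar i) v == 1) | i < m].
  have HG : mono G.
    move=> i; case: (Hlm i) => [[j Hj]|[H0|H1]].
    + by left; exists j => v; rewrite tnth_mktuple Hj ffunE; case: (tnth v j).
    + by right; exists false => v; rewrite tnth_mktuple H0 /GRing.zero /= ffunE.
    + by right; exists true => v; rewrite tnth_mktuple H1 /GRing.one /= ffunE.
  have key : forall cc : csub C, exists d, qphi phi cc = Some d /\ G (val cc) = val d.
    move=> cc; have [d [Hd Hf]] := qphi_spec phi cc.
    exists d; split => //; apply: eq_from_tnth => i; rewrite tnth_mktuple.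
    have := congr1 (fun g : RC C => g cc) (Hc (xvar i) 1).
    rewrite Hf rmorph1 !ffunE.
    rewrite !mulr1 => <-.
    by case: (tnth (val d) i).
  have [F [HF HF']] := build C HG.
  exists (id \o F); split.
    apply: CComp HF (CBasic (BIncl _)).
    apply/subsetP => y /imsetP [c Hc' ->].
    have [d [_ e]] := key (exist _ c Hc'); rewrite /= in e; rewrite e.
    exact: (valP d).
  move=> cc; have [d [-> e]] := key cc; by rewrite /= HF' e.
- case=> F [HF Hq].
  have HM := comp_mono HF.
  exists (comap F : {rmorphism Rn m -> Rn n}); split.
    move=> i; case: (HM i) => [[j Hj]|[b Hb]].
      by left; exists j; apply/ffunP => v; rewrite !ffunE Hj.
    right; case: b Hb => Hb; [right|left]; apply/ffunP => v;
      by rewrite !ffunE Hb.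
  move=> r f; apply/ffunP => cc.
  have [d [Hd Hf]] := qphi_spec phi cc.
  have := Hq cc; rewrite Hd /= => -[e].
  by rewrite Hf !ffunE Hf -e.
Qed.
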